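(* Let $R$ be a commutative ring with identity, let $S$ and $T$ be multiplicative subsets of $R$, and let $M$ be a unitary $R$-module. Then: (1) If $A$ is an $R_T$-submodule of $M_T$, then $A=L_T$ for some $R$-submodule $L$ of $M$. (2) If $M$ is an $S$-Noetherian $R$-module, then $M_T$ is an $S_T$-Noetherian $R_T$-module. Furthermore, if $T$ consists of regular elements of $R$, then $M_T$ is an $S$-Noetherian $R_T$-module.
   Context: $S_T=\{s/t\mid s\in S,\ t\in T\}$, a multiplicative subset of $R_T$. A submodule $L$ of a module $M$ is $S$-finite if there exist $s\in S$ and a finitely generated submodule $F$ of $M$ with $Ls\subseteq F\subseteq L$; $M$ is $S$-Noetherian if every submodule of $M$ is $S$-finite. When $T$ consists of regular elements, $R$ is regarded as a subring of $R_T$, so $S$ is a multiplicative subset of $R_T$. *)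

(* Defs.v *)
From HB Require Import structures.
From mathcomp Require Import all_boot all_algebra.
Set Implicit Arguments. Unset Strict Implicit. Unset Printing Implicit Defensive.
Import GRing.Theory.
Local Open Scope ring_scope.

Definition multiplicative (R : comPzRingType) (S : {pred R}) : Prop :=
  1 \in S /\ (forall a b, a \in S -> b \in S -> a * b \in S).

Definition submodule (R : comPzRingType) (M : lmodType R) (L : M -> Prop) : Prop :=
  [/\ L 0, (forall x y, L x -> L y -> L (x + y)) & (forall (r : R) x, L x -> L (r *: x))].

Definition span (R : comPzRingType) (M : lmodType R) (ms : seq M) : M -> Prop :=
  fun m => exists cs : seq R, size cs = size ms /\
                    m = \sum_(i < size ms) cs`_i *: ms`_i.

Definition S_finite (R : comPzRingType) (M : lmodType R) (S : {pred R}) (L : M -> Prop) : Prop :=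
  exists2 s, s \in S &
    exists ms : seq M, (forall m, span ms m -> L m) /\ (forall m, L m -> span ms (s *: m)).

Definition S_noetherian (R : comPzRingType) (M : lmodType R) (S : {pred R}) : Prop :=
  forall L : M -> Prop, submodule L -> S_finite S L.

(** An element m/t of M_T is represented by a pair (m, t) : M * R with t \in T;
   an element r/u of R_T by a pair (r, u) : R * R with u \in T.
   (m,t) and (m',t') represent the same element iff u (t' m - t m') = 0
   for some u \in T.  Subsets of M_T are Prop-predicates on pairs that only
   hold for valid pairs and are invariant under this equivalence. *)

Definition frac_equiv (R : comPzRingType) (M : lmodType R) (T : {pred R})
  (x y : M * R) : Prop :=
  exists2 u, u \in T & u *: (y.2 *: x.1 - x.2 *: y.1) = 0.

(** m/t + m'/t' = (t' m + t m')/(t t') *)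
Definition fadd (R : comPzRingType) (M : lmodType R) (x y : M * R) : M * R :=
  (y.2 *: x.1 + x.2 *: y.1, x.2 * y.2).

(** (r/u) (m/t) = (r m)/(u t) *)
Definition fscale (R : comPzRingType) (M : lmodType R) (c : R * R) (x : M * R) : M * R :=
  (c.1 *: x.1, c.2 * x.2).

Definition loc_submodule (R : comPzRingType) (M : lmodType R) (T : {pred R})
  (A : M * R -> Prop) : Prop :=
  [/\ (forall x, A x -> x.2 \in T),
      (forall x y, y.2 \in T -> A x -> frac_equiv T x y -> A y),
      A (0, 1),
      (forall x y, A x -> A y -> A (fadd x y)) &
      (forall (c : R * R) x, c.2 \in T -> A x -> A (fscale c x))].

Definition loc_of (R : comPzRingType) (M : lmodType R) (T : {pred R})
  (L : M -> Prop) : M * R -> Prop :=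
  fun x => x.2 \in T /\ exists l t, [/\ L l, t \in T & frac_equiv T x (l, t)].

Definition loc_span (R : comPzRingType) (M : lmodType R) (T : {pred R})
  (xs : seq (M * R)) : M * R -> Prop :=
  fun x => x.2 \in T /\
    exists cs : seq (R * R), [/\ size cs = size xs, all (fun c => c.2 \in T) cs &
      frac_equiv T x (foldr (@fadd R M) (0, 1)
                        [seq fscale cx.1 cx.2 | cx <- zip cs xs])].

(** A (subset of M_T) is D-finite, where D is a set of elements of R_T given
    by representative pairs: A d ⊆ F ⊆ A for some d in D and finitely
    generated R_T-submodule F of M_T. *)
Definition loc_finite (R : comPzRingType) (M : lmodType R) (T : {pred R})
  (D : R * R -> Prop) (A : M * R -> Prop) : Prop :=
  exists2 d, D d &
    exists xs : seq (M * R), [/\ all (fun x => x.2 \in T) xs,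
      (forall x, loc_span T xs x -> A x) &
      (forall x, A x -> loc_span T xs (fscale d x))].

Definition loc_noetherian (R : comPzRingType) (M : lmodType R) (T : {pred R})
  (D : R * R -> Prop) : Prop :=
  forall A : M * R -> Prop, loc_submodule T A -> loc_finite T D A.

Definition S_loc (R : comPzRingType) (S T : {pred R}) : R * R -> Prop :=
  fun d => d.1 \in S /\ d.2 \in T.

(** S viewed inside R_T via s |-> s/1 *)
Definition S_in_loc (R : comPzRingType) (S : {pred R}) : R * R -> Prop :=
  fun d => d.1 \in S /\ d.2 = 1.

Definition regular_set (R : comPzRingType) (T : {pred R}) : Prop :=
  forall t, t \in T -> forall r : R, t * r = 0 -> r = 0.

(* Main.v *)
Require Import Defs.
From mathcomp Require Import all_boot all_algebra.
Local Open Scope ring_scope.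
Module Helpers.
Import GRing.Theory.

Lemma foldr_t (R : comPzRingType) (M : lmodType R) (t : R) (ms : seq M) (cs : seq R) :
  size cs = size ms ->
  let F := foldr (@fadd R M) (0,1) [seq fscale cx.1 cx.2 | cx <- zip [seq (c,t) | c <- cs] [seq (m,1) | m <- ms]] in
  F.2 = t ^+ size ms /\ t *: F.1 = t ^+ size ms *: \sum_(i < size ms) cs`_i *: ms`_i.
Proof.
elim: ms cs => [|m ms IH] [|c cs] //= => [_|[hs]].
  by rewrite big_ord0 expr0 !scaler0.
have [h2 h1] := IH cs hs.
rewrite /fadd /fscale /=.
split; first by rewrite h2 mulr1 exprS.
rewrite big_ord_recl /= h2 scalerDr scalerA -exprS scalerDr; congr (_ + _).
by rewrite mulr1 scalerA -scalerA h1 scalerA -exprS.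
Qed.

Lemma span_nth (R : comPzRingType) (M : lmodType R) (ms : seq M) i :
  (i < size ms)%N -> Defs.span ms ms`_i.
Proof.
move=> hi; exists [seq (i == j)%:R | j <- iota 0 (size ms)].
split; first by rewrite size_map size_iota.
rewrite (bigD1 (Ordinal hi)) //= big1 ?addr0.
  by rewrite (nth_map 0%N) ?size_iota // nth_iota // eqxx scale1r.
move=> j /eqP hj; rewrite (nth_map 0%N) ?size_iota // nth_iota // add0n.
have -> : (i == j) = false by apply/eqP => e; apply: hj; apply: val_inj.
by rewrite scale0r.
Qed.

Lemma foldr_in (R : comPzRingType) (M : lmodType R) (T : {pred R}) (A : M * R -> Prop)
  : loc_submodule T A -> forall (ms : seq M) (cs : seq (R * R)),
  all (fun c => c.2 \in T) cs -> (forall m, m \in ms -> A (m, 1)) ->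
  A (foldr (@fadd R M) (0,1) [seq fscale cx.1 cx.2 | cx <- zip cs [seq (m,1) | m <- ms]]).
Proof.
case=> h1 hE h0 hD hZ; elim=> [|m ms IH] [|c cs] //= /andP[hc hcs] hm.
apply: hD; first by apply: hZ => //; apply: hm; rewrite inE eqxx.
by apply: IH => // x hx; apply: hm; rewrite inE hx orbT.
Qed.

Lemma A_unit (R : comPzRingType) (M : lmodType R) (T : {pred R}) (A : M * R -> Prop) :
  Defs.multiplicative T -> loc_submodule T A -> forall m t, A (m, t) -> A (m, 1).
Proof.
rewrite /Defs.multiplicative => -[hT1 _] [h1 hE h0 hD hZ] m t hA.
have := hZ (t, 1) (m, t) hT1 hA; rewrite /fscale /= => hA'.
apply: (hE _ (m, 1) hT1 hA'); exists 1 => //=.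
by rewrite scale1r mul1r scale1r subrr.
Qed.

Lemma part1 (R : comPzRingType) (M : lmodType R) (T : {pred R}) (A : M * R -> Prop) :
  Defs.multiplicative T -> loc_submodule T A ->
  submodule (fun m : M => A (m, 1)) /\
  forall x : M * R, x.2 \in T -> (A x <-> loc_of T (fun m : M => A (m, 1)) x).
Proof.
move=> hT hA; have hT1 : 1 \in T by case: hT.
 have hAu := @A_unit _ _ _ _ hT hA.
case: hA => h1 hE h0 hD hZ; split.
  split => //.
    move=> x y hx hy; have := hD _ _ hx hy; rewrite /fadd /= => h.
    apply: (hE _ (x + y, 1) hT1 h); exists 1 => //=.
    by rewrite !scale1r mul1r scale1r subrr.
  move=> r x hx; have := hZ (r, 1) _ hT1 hx; rewrite /fscale /= => h.
  apply: (hE _ (r *: x, 1) hT1 h); exists 1 => //=.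
  by rewrite !scale1r mul1r scale1r subrr.
case=> m t /= ht; split.
  move=> hmt; split => //; exists m, t; split => //; first exact: hAu hmt.
  by exists 1 => //=; rewrite subrr scaler0.
case=> _ [l [u [hl hu [v hv e]]]].
have := hZ (1, u) _ hu hl; rewrite /fscale /= => h.
apply: (hE _ (m, t) ht h); exists v => //=.
by rewrite scale1r mulr1 -opprB scalerN /= e oppr0.
Qed.

Lemma part2 (R : comPzRingType) (S T : {pred R}) (M : lmodType R)
  (hT : Defs.multiplicative T) : @S_noetherian R M S ->
  forall A, loc_submodule T A -> exists2 d : R * R, d.1 \in S /\ d.2 = 1 &
    exists xs : seq (M * R), [/\ all (fun x => x.2 \in T) xs,
      (forall x, loc_span T xs x -> A x) &
      (forall x, A x -> loc_span T xs (fscale d x))].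
Proof.
move=> hN A hA.
have [hT1 hTm] := hT.
have [hL _] := @part1 _ _ _ _ hT hA.
have hAu := @A_unit _ _ _ _ hT hA.
have [s hs [ms [hsp1 hsp2]]] := hN _ hL.
exists (s, 1) => //; exists [seq (m, 1) | m <- ms]; split.
- by rewrite all_map; apply/allP.
- case=> m t [/= ht [cs [hsz hcs he]]].
  have hF := @foldr_in _ _ _ _ hA ms cs hcs.
  have hF' : A (foldr (@fadd R M) (0,1) [seq fscale cx.1 cx.2 | cx <- zip cs [seq (m,1) | m <- ms]]).
    apply: hF => x /(nthP 0) [i hi <-]; apply: hsp1; exact: span_nth.
  case: hA => h1 hE _ _ _.
  apply: (hE _ (m, t) ht hF').
  case: he => u hu e; exists u => //.
  by rewrite -opprB scalerN e oppr0.
- case=> m t hmt; rewrite /fscale /=.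
  have [cs [hsz e]] := hsp2 _ (hAu _ _ hmt).
  have ht : t \in T by case: hA => h1 _ _ _ _; exact: (h1 _ hmt).
  split; first by rewrite mul1r.
  exists [seq (c, t) | c <- cs]; split.
  + by rewrite size_map size_map.
  + by rewrite all_map; apply/allP.
  + have [F2 F1] := @foldr_t _ _ t ms cs hsz.
    exists t => //=.
    rewrite /= in F1 F2 *.
    by rewrite F2 mul1r F1 -e subrr scaler0.
Qed.

End Helpers.
Import Helpers.

Theorem lemma2p1 (R : comPzRingType) (S T : {pred R}) (M : lmodType R)
  (hS : multiplicative S) (hT : multiplicative T) :
  (forall A : M * R -> Prop, loc_submodule T A ->
     exists2 L : M -> Prop, submodule L &
       forall x : M * R, x.2 \in T -> (A x <-> loc_of T L x)) /\
  (@S_noetherian R M S ->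
     @loc_noetherian R M T (S_loc S T) /\
     (regular_set T -> @loc_noetherian R M T (S_in_loc S))).
Proof.
split.
  move=> A hA; have [h1 h2] := @part1 _ _ _ _ hT hA.
  by exists (fun m => A (m, 1)).
move=> hN; have hT1 : 1 \in T by case: hT.
split; last move=> _; move=> A hA;
  have [d [hd1 hd2] hx] := @part2 _ S _ M hT hN A hA; exists d => //.
by split => //; rewrite hd2.
Qed.
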